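(* Let $x$ be a theory of $APAL_{int}$, $\varphi\in\mathcal{L}_{APAL_{int}}$ and $i$ an agent. If $K_i\varphi\notin x$, then there is a maximally consistent theory $y$ such that $K_ix\subseteq y$ and $\varphi\notin y$.
   Context: $\mathcal{L}_{APAL_{int}}$: $\varphi ::= p \mid \neg\varphi \mid \varphi\wedge\varphi \mid K_i\varphi \mid \mathrm{int}(\varphi)\mid [\varphi]\varphi\mid\Box\varphi$ over a countable $\mathit{Prop}$ and finite non-empty agent set $\mathcal{A}$; $\mathcal{L}_{PAL_{int}}$ its $\Box$-free fragment; $\bot:=p\wedge\neg p$. Necessity forms: $\xi(\sharp)::=\sharp\mid\varphi\to\xi(\sharp)\mid K_i\xi(\sharp)\mid\mathrm{int}(\xi(\sharp))\mid[\varphi]\xi(\sharp)$. $APAL_{int}$: axioms: propositional tautologies; $K_i(\varphi\to\psi)\to(K_i\varphi\to K_i\psi)$; $K_i\varphi\to\varphi$; $K_i\varphi\to K_iK_i\varphi$; $\neg K_i\varphi\to K_i\neg K_i\varphi$; $\mathrm{int}(\varphi\to\psi)\to(\mathrm{int}(\varphi)\to\mathrm{int}(\psi))$; $\mathrm{int}(\varphi)\to\varphi$; $\mathrm{int}(\varphi)\to\mathrm{int}(\mathrm{int}(\varphi))$; $K_i\varphi\to\mathrm{int}(\varphi)$; $[\varphi]p\leftrightarrow(\mathrm{int}(\varphi)\to p)$; $[\varphi]\neg\psi\leftrightarrow(\mathrm{int}(\varphi)\to\neg[\varphi]\psi)$; $[\varphi](\psi\wedge\chi)\leftrightarrow[\varphi]\psi\wedge[\varphi]\chi$;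 $[\varphi]\mathrm{int}(\psi)\leftrightarrow(\mathrm{int}(\varphi)\to\mathrm{int}([\varphi]\psi))$; $[\varphi]K_i\psi\leftrightarrow(\mathrm{int}(\varphi)\to K_i[\varphi]\psi)$; $[\varphi][\psi]\chi\leftrightarrow[\neg[\varphi]\neg\mathrm{int}(\psi)]\chi$; $\Box\varphi\to[\chi]\varphi$ ($\chi\in\mathcal{L}_{PAL_{int}}$). Rules: modus ponens; from $\varphi$ infer $K_i\varphi$; from $\varphi$ infer $\mathrm{int}(\varphi)$; from $\varphi$ infer $[\psi]\varphi$; (DR5) from $\xi([\psi]\chi)$ for all $\psi\in\mathcal{L}_{PAL_{int}}$ infer $\xi(\Box\chi)$. A theory is a set of formulas containing all theorems of $APAL_{int}$ and closed under modus ponens and (DR5); it is consistent iff $\bot\notin$ it; a set of formulas is consistent iff it is contained in a consistent theory; a theory is maximally consistent iff it is consistent and every set properly containing it is inconsistent. $K_ix:=\{\varphi\mid K_i\varphi\in x\}$. *)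

(* Defs.v *)
From Stdlib Require Import List.
Set Implicit Arguments.

Inductive form (A : Type) : Type :=
| Var : nat -> form A
| Neg : form A -> form A
| And : form A -> form A -> form A
| K : A -> form A -> form A
| Int : form A -> form A
| Ann : form A -> form A -> form A
| Box : form A -> form A.
Arguments Var {A} _.

Section Syntax.
Variable A : Type.

Definition Bot : form A := And (Var 0) (Neg (Var 0)).
Definition Imp (p q : form A) : form A := Neg (And p (Neg q)).
Definition Iff (p q : form A) : form A := And (Imp p q) (Imp q p).

Fixpoint boxfree (p : form A) : Prop :=
  match p with
  | Var _ => True
  | Neg q => boxfree q
  | And q r => boxfree q /\ boxfree r
  | K _ q => boxfree q
  | Int q => boxfree q
  | Ann q r => boxfree q /\ boxfree r
  | Box _ => False
  end.

Inductive nform : Type :=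
| NHole : nform
| NImp : form A -> nform -> nform
| NK : A -> nform -> nform
| NInt : nform -> nform
| NAnn : form A -> nform -> nform.

Fixpoint fill (xi : nform) (c : form A) : form A :=
  match xi with
  | NHole => c
  | NImp p xi' => Imp p (fill xi' c)
  | NK i xi' => K i (fill xi' c)
  | NInt xi' => Int (fill xi' c)
  | NAnn p xi' => Ann p (fill xi' c)
  end.

(* propositional tautologies: true under every assignment of truth values to
   the maximal non-Boolean subformulas *)
Fixpoint peval (v : form A -> bool) (p : form A) : bool :=
  match p with
  | Neg q => negb (peval v q)
  | And q r => andb (peval v q) (peval v r)
  | _ => v p
  end.
Definition tautology (p : form A) : Prop := forall v, peval v p = true.

Inductive thm : form A -> Prop :=
| ax_taut p : tautology p -> thm p
| ax_K i p q : thm (Imp (K i (Imp p q)) (Imp (K i p) (K i q)))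
| ax_T i p : thm (Imp (K i p) p)
| ax_4 i p : thm (Imp (K i p) (K i (K i p)))
| ax_5 i p : thm (Imp (Neg (K i p)) (K i (Neg (K i p))))
| ax_intK p q : thm (Imp (Int (Imp p q)) (Imp (Int p) (Int q)))
| ax_intT p : thm (Imp (Int p) p)
| ax_int4 p : thm (Imp (Int p) (Int (Int p)))
| ax_Kint i p : thm (Imp (K i p) (Int p))
| ax_Rp p n : thm (Iff (Ann p (Var n)) (Imp (Int p) (Var n)))
| ax_Rneg p q : thm (Iff (Ann p (Neg q)) (Imp (Int p) (Neg (Ann p q))))
| ax_Rand p q r : thm (Iff (Ann p (And q r)) (And (Ann p q) (Ann p r)))
| ax_Rint p q : thm (Iff (Ann p (Int q)) (Imp (Int p) (Int (Ann p q))))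
| ax_RK p i q : thm (Iff (Ann p (K i q)) (Imp (Int p) (K i (Ann p q))))
| ax_Rann p q r : thm (Iff (Ann p (Ann q r)) (Ann (Neg (Ann p (Neg (Int q)))) r))
| ax_Box p c : boxfree c -> thm (Imp (Box p) (Ann c p))
| r_mp p q : thm (Imp p q) -> thm p -> thm q
| r_necK i p : thm p -> thm (K i p)
| r_necInt p : thm p -> thm (Int p)
| r_necAnn q p : thm p -> thm (Ann q p)
| r_DR5 xi c : (forall q, boxfree q -> thm (fill xi (Ann q c))) -> thm (fill xi (Box c)).

Definition fset := form A -> Prop.

Definition theory (x : fset) : Prop :=
  (forall p, thm p -> x p) /\
  (forall p q, x (Imp p q) -> x p -> x q) /\
  (forall xi c, (forall q, boxfree q -> x (fill xi (Ann q c))) -> x (fill xi (Box c))).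

Definition consistent_theory (x : fset) : Prop := theory x /\ ~ x Bot.

Definition consistent_set (s : fset) : Prop :=
  exists x, consistent_theory x /\ (forall p, s p -> x p).

Definition maximally_consistent_theory (x : fset) : Prop :=
  consistent_theory x /\
  forall s : fset, (forall p, x p -> s p) -> (exists p, s p /\ ~ x p) -> ~ consistent_set s.

Definition Kset (i : A) (x : fset) : fset := fun p => x (K i p).

End Syntax.

(* Main.v *)
Require Import Defs.
From Stdlib Require Import List.
From Stdlib Require Import Arith Lia Cantor Classical ClassicalEpsilon.

Section Aux.
Variable A : Type.

Definition pr (a b : nat) : nat := Cantor.to_nat (a, b).
Lemma pr_inj a b c d : pr a b = pr c d -> a = c /\ b = d.
Proof.
  unfold pr; intro H.
  assert (E := f_equal Cantor.of_nat H). rewrite !Cantor.cancel_of_to in E.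
  inversion E; auto.
Qed.

Variable idx : A -> nat.
Hypothesis idx_inj : forall a b, idx a = idx b -> a = b.

Fixpoint encf (p : form A) : nat :=
  match p with
  | Var n => pr 0 n
  | Neg q => pr 1 (encf q)
  | And q r => pr 2 (pr (encf q) (encf r))
  | K a q => pr 3 (pr (idx a) (encf q))
  | Int q => pr 4 (encf q)
  | Ann q r => pr 5 (pr (encf q) (encf r))
  | Box q => pr 6 (encf q)
  end.

Lemma encf_inj p q : encf p = encf q -> p = q.
Proof.
  revert q; induction p; intros [] H; simpl in H;
  repeat match goal with
  | H : pr _ _ = pr _ _ |- _ => apply pr_inj in H; destruct H
  end; try discriminate;
  repeat match goal with
  | H : encf ?p = encf _, IH : forall q, encf ?p = encf q -> _ |- _ => apply IH in H
  | H : idx _ = idx _ |- _ => apply idx_inj in H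
  end; subst; auto.
Qed.

Fixpoint encn (x : nform A) : nat :=
  match x with
  | NHole _ => pr 0 0
  | NImp p x' => pr 1 (pr (encf p) (encn x'))
  | NK a x' => pr 2 (pr (idx a) (encn x'))
  | NInt x' => pr 3 (encn x')
  | NAnn p x' => pr 4 (pr (encf p) (encn x'))
  end.

Lemma encn_inj p q : encn p = encn q -> p = q.
Proof.
  revert q; induction p; intros [] H; simpl in H;
  repeat match goal with
  | H : pr _ _ = pr _ _ |- _ => apply pr_inj in H; destruct H
  end; try discriminate;
  repeat match goal with
  | H : encn ?p = encn _, IH : forall q, encn ?p = encn q -> _ |- _ => apply IH in H
  | H : encf _ = encf _ |- _ => apply encf_inj in H
  | H : idx _ = idx _ |- _ => apply idx_inj in H
  end; subst; auto.
Qed.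

Definition enct (t : form A * nform A * form A) : nat :=
  let '(f, xi, c) := t in pr (encf f) (pr (encn xi) (encf c)).

Lemma enct_inj t u : enct t = enct u -> t = u.
Proof.
  destruct t as [[f xi] c], u as [[f' xi'] c']; simpl; intro H.
  apply pr_inj in H as [H1 H2]. apply pr_inj in H2 as [H2 H3].
  apply encf_inj in H1; apply encn_inj in H2; apply encf_inj in H3; subst; auto.
Qed.

Definition dec (n : nat) : form A * nform A * form A :=
  epsilon (inhabits (Var 0, NHole A, Var 0)) (fun t => enct t = n).

Lemma dec_surj t : dec (enct t) = t.
Proof.
  apply enct_inj. unfold dec. apply (epsilon_spec (inhabits (Var 0, NHole A, Var 0)) (fun u => enct u = enct t)).
  eauto.
Qed.

End Aux.
Ltac taut := intro; unfold Imp, Iff, Bot; simpl;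
  repeat match goal with
  | |- context [peval ?v ?p] => destruct (peval v p)
  | |- context [?v (Var 0)] => destruct (v (Var 0))
  end; reflexivity.

Section Lind.
Variable A : Type.
Variable T : fset A.
Hypothesis HT : theory T.

Lemma T_thm p : thm p -> T p. Proof. apply HT. Qed.
Lemma T_mp p q : T (Imp p q) -> T p -> T q. Proof. apply HT. Qed.
Lemma T_t1 a b : tautology (Imp a b) -> T a -> T b.
Proof. intros. eapply T_mp; [apply T_thm; constructor; eauto|eauto]. Qed.
Lemma T_t2 a b c : tautology (Imp a (Imp b c)) -> T a -> T b -> T c.
Proof. intros. eapply T_mp; [eapply T_t1; eauto|eauto]. Qed.

Definition cons (c : form A) := ~ T (Imp c (Bot A)).

Variable e : nat -> form A * nform A * form A.
Hypothesis e_surj : forall t, exists n, e n = t.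

Definition Good (c : form A) (t : form A * nform A * form A) (c' : form A) : Prop :=
  let '(f, xi, ch) := t in
  cons c' /\ T (Imp c' c) /\ (T (Imp c' f) \/ T (Imp c' (Neg f))) /\
  (T (Imp c' (fill xi (Box ch))) \/
   exists q, boxfree q /\ T (Imp c' (Neg (fill xi (Ann q ch))))).

Lemma step_ex c t : cons c -> exists c', Good c t c'.
Proof.
  intros Hc. destruct t as [[f xi] ch]. unfold Good.
  assert (H1 : exists c1, cons c1 /\ T (Imp c1 c) /\ (T (Imp c1 f) \/ T (Imp c1 (Neg f)))).
  { destruct (classic (cons (And c f))) as [Hf|Hf].
    - exists (And c f). split; [auto|split].
      + apply T_thm; constructor; taut.
      + left; apply T_thm; constructor; taut.
    - exists (And c (Neg f)). unfold cons in *. apply NNPP in Hf. split; [|split].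
      + intro H. apply Hc. eapply T_t2; [|exact Hf|exact H]. taut.
      + apply T_thm; constructor; taut.
      + right; apply T_thm; constructor; taut. }
  destruct H1 as [c1 [Hc1 [Hc1c Hdec]]].
  set (g := fill xi (Box ch)).
  destruct (classic (cons (And c1 g))) as [Hg|Hg].
  - exists (And c1 g). split; [auto|split;[|split]].
    + eapply T_t1; [|exact Hc1c]. taut.
    + destruct Hdec as [H|H]; [left|right]; eapply T_t1; try exact H; taut.
    + left. apply T_thm; constructor; taut.
  - unfold cons in Hg. apply NNPP in Hg.
    destruct (classic (exists q, boxfree q /\ cons (And c1 (Neg (fill xi (Ann q ch)))))) as [[q [Hq Hcq]]|Hno].
    + exists (And c1 (Neg (fill xi (Ann q ch)))). split; [auto|split;[|split]].
      * eapply T_t1; [|exact Hc1c]. taut.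
      * destruct Hdec as [H|H]; [left|right]; eapply T_t1; try exact H; taut.
      * right. exists q. split; auto. apply T_thm; constructor; taut.
    + exfalso. apply Hc1.
      assert (HD : T (Imp c1 g)).
      { unfold g. change (T (fill (NImp c1 xi) (Box ch))). apply HT.
        intros q Hq. simpl. assert (Hn : T (Imp (And c1 (Neg (fill xi (Ann q ch)))) (Bot A))).
        { apply NNPP. intro Hn. apply Hno. exists q. split; auto. }
        eapply T_t1; [|exact Hn]. taut. }
      eapply T_t2; [|exact HD|exact Hg]. taut.
Qed.

Definition step (c : form A) (n : nat) : form A :=
  epsilon (inhabits c) (fun c' => Good c (e n) c').

Variable c0 : form A.
Hypothesis Hc0 : cons c0.

Fixpoint cs (n : nat) : form A :=
  match n with 0 => c0 | S m => step (cs m) m end.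

Lemma cs_good n : cons (cs n) /\ Good (cs n) (e n) (cs (S n)).
Proof.
  induction n.
  - split; auto. simpl. unfold step. apply epsilon_spec. apply step_ex; auto.
  - destruct IHn as [_ HG]. assert (Hc : cons (cs (S n))).
    { unfold Good in HG. destruct (e n) as [[? ?] ?]. tauto. }
    split; auto. change (Good (cs (S n)) (e (S n)) (step (cs (S n)) (S n))).
    unfold step. apply epsilon_spec. apply step_ex; auto.
Qed.

Lemma cs_cons n : cons (cs n). Proof. apply cs_good. Qed.

Lemma cs_mono n m : n <= m -> T (Imp (cs m) (cs n)).
Proof.
  induction 1.
  - apply T_thm; constructor; taut.
  - destruct (cs_good m) as [_ HG]. unfold Good in HG. destruct (e m) as [[? ?] ?].
    destruct HG as [_ [HH _]]. eapply T_t2; [|exact HH|exact IHle]. taut.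
Qed.

Definition Y : fset A := fun p => exists n, T (Imp (cs n) p).

Lemma Y_lift n p : T (Imp (cs n) p) -> forall m, n <= m -> T (Imp (cs m) p).
Proof. intros H m Hm. eapply T_t2; [|exact (cs_mono _ _ Hm)|exact H]. taut. Qed.

Lemma Y_t2 a b c : tautology (Imp a (Imp b c)) -> Y a -> Y b -> Y c.
Proof.
  intros Ht [n Hn] [m Hm]. exists (max n m).
  apply Y_lift with (m := max n m) in Hn; [|lia].
  apply Y_lift with (m := max n m) in Hm; [|lia].
  eapply T_t2; [|exact Hn|exact Hm].
  intro v. specialize (Ht v). revert Ht. unfold Imp; simpl.
  destruct (peval v a), (peval v b), (peval v c), (peval v (cs (max n m))); simpl; auto.
Qed.

Lemma Y_nbot : ~ Y (Bot A).
Proof. intros [n Hn]. exact (cs_cons n Hn). Qed.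

Lemma Y_T p : T p -> Y p.
Proof. intros H. exists 0. eapply T_t1; [|exact H]. taut. Qed.

Lemma Y_dec_at n : let '(f, xi, ch) := e n in
  (Y f \/ Y (Neg f)) /\ (Y (fill xi (Box ch)) \/
   exists q, boxfree q /\ Y (Neg (fill xi (Ann q ch)))).
Proof.
  destruct (cs_good n) as [_ HG]. unfold Good in HG. destruct (e n) as [[f xi] ch].
  destruct HG as [_ [_ [H1 H2]]]. split.
  - destruct H1; [left|right]; exists (S n); auto.
  - destruct H2 as [H|[q [Hq H]]]; [left; exists (S n); auto|right; exists q; split; auto; exists (S n); auto].
Qed.

Lemma Y_theory : theory Y.
Proof.
  split; [|split].
  - intros p Hp. apply Y_T, T_thm, Hp.
  - intros p q H1 H2. eapply Y_t2; [|exact H1|exact H2]. taut.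
  - intros xi ch H. destruct (e_surj (Var 0, xi, ch)) as [n Hn].
    pose proof (Y_dec_at n) as D. rewrite Hn in D. destruct D as [_ [D|[q [Hq D]]]]; auto.
    exfalso. apply Y_nbot. eapply Y_t2; [|exact (H q Hq)|exact D]. taut.
Qed.

Lemma Y_max : maximally_consistent_theory Y.
Proof.
  split; [split; [apply Y_theory|apply Y_nbot]|].
  intros s Hs [p [Hp Hnp]] [z [[Hz Hzb] Hsz]].
  destruct (e_surj (p, NHole A, Var 0)) as [n Hn].
  pose proof (Y_dec_at n) as D. rewrite Hn in D. destruct D as [[D|D] _]; [tauto|].
  apply Hzb. destruct Hz as [Hzt [Hzmp _]].
  eapply Hzmp; [|apply Hsz, Hp]. eapply Hzmp; [|apply Hsz, Hs, D].
  apply Hzt. constructor. taut.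
Qed.

Lemma Y_c0 : Y c0.
Proof. exists 0. apply T_thm; constructor; taut. Qed.

End Lind.

Theorem mainTheorem19 (A : Type) (HAfin : exists l : list A, forall a, In a l)
  (HAne : inhabited A) (x : fset A) (phi : form A) (i : A) :
  theory x -> ~ x (K i phi) ->
  exists y : fset A, maximally_consistent_theory y /\
    (forall p, Kset i x p -> y p) /\ ~ y phi.
Proof.
  intros Hx Hphi.
  destruct HAfin as [l Hl].
  assert (Hidx : forall a, exists n, nth_error l n = Some a).
  { intro a. apply In_nth_error, Hl. }
  set (idx := fun a => proj1_sig (constructive_indefinite_description _ (Hidx a))).
  assert (idx_inj : forall a b, idx a = idx b -> a = b).
  { intros a b H. unfold idx in H.
    destruct (constructive_indefinite_description _ (Hidx a)) as [na Ha].
    destruct (constructive_indefinite_description _ (Hidx b)) as [nb Hb].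
    simpl in H. subst. rewrite Ha in Hb. congruence. }
  assert (e_surj : forall t, exists n, dec A idx n = t).
  { intro t. exists (enct A idx t). apply dec_surj; auto. }
  destruct Hx as [Hxt [Hxmp Hxdr]].
  assert (HT : theory (Kset i x)).
  { unfold Kset. split; [|split].
    - intros p Hp. apply Hxt. apply r_necK, Hp.
    - intros p q H1 H2. eapply Hxmp; [|exact H2]. eapply Hxmp; [|exact H1]. apply Hxt, ax_K.
    - intros xi c H. change (x (fill (NK i xi) (Box c))). apply Hxdr. exact H. }
  assert (Hc0 : cons A (Kset i x) (Neg phi)).
  { intro H. apply Hphi. unfold Kset in *.
    eapply Hxmp; [|exact H]. eapply Hxmp; [apply Hxt, ax_K|]. apply Hxt, r_necK, ax_taut. taut. }
  exists (Y A (Kset i x) (dec A idx) (Neg phi)). split; [|split].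
  - eapply Y_max; eauto.
  - intros p Hp. eapply Y_T; eauto.
  - intro H. eapply Y_nbot; [exact HT|exact Hc0|].
    eapply Y_t2; [exact HT|exact Hc0| | exact H | eapply Y_c0; exact HT]. taut.
Qed.
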